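(* Let $r>0$, $d>0$ with $d\sqrt{2}<r$, and let $X\subseteq\mathbb{R}^2$ be a bounded $r$-regular set whose boundary contains no point of $d\mathbb{Z}^2$. Let $Q$ be the $2d\times 2d$ square formed by a $2\times 2$ block of pixels of the lattice $d\mathbb{Z}^2$, all four of which are grey. Then $\partial X$ does not intersect all four edges (sides of length $2d$) of $Q$.
   Context: A closed set $X\subseteq\mathbb{R}^2$ is $r$-regular if for each $x\in\partial X$ there are two open balls of radius $r$, $B_r(x_b)\subseteq X$ and $B_r(x_w)\subseteq \mathbb{R}^2\setminus X$, with $\overline{B_r(x_b)}\cap\overline{B_r(x_w)}=\{x\}$. Pixels are the closed squares $[dk,d(k+1)]\times[dl,d(l+1)]$, $k,l\in\mathbb{Z}$. A pixel $P$ is black if $\mathrm{area}(X\cap P)=d^2$, white if $\mathrm{area}(X\cap P)=0$, and grey otherwise. *)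

(* Defs.v *)
From HB Require Import structures.
From mathcomp Require Import all_boot all_order all_algebra.
From mathcomp Require Import all_classical all_reals all_analysis.
Set Implicit Arguments. Unset Strict Implicit. Unset Printing Implicit Defensive.
Import Order.TTheory GRing.Theory Num.Theory.
Import numFieldNormedType.Exports.
Local Open Scope classical_set_scope.
Local Open Scope ring_scope.

Definition odisk {R : realType} (c : R * R) (r : R) : set (R * R) :=
  [set y | (y.1 - c.1) ^+ 2 + (y.2 - c.2) ^+ 2 < r ^+ 2].

Definition cdisk {R : realType} (c : R * R) (r : R) : set (R * R) :=
  [set y | (y.1 - c.1) ^+ 2 + (y.2 - c.2) ^+ 2 <= r ^+ 2].

(* Topological boundary in R^2 (product topology = Euclidean topology). *)
Definition bdry {R : realType} (X : set (R * R)) : set (R * R) :=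
  closure X `\` interior X.

Definition r_regular {R : realType} (r : R) (X : set (R * R)) : Prop :=
  closed X /\
  forall x, bdry X x ->
    exists xb xw : R * R,
      odisk xb r `<=` X /\ odisk xw r `<=` ~` X /\
      cdisk xb r `&` cdisk xw r = [set x].

Definition bounded2 {R : realType} (X : set (R * R)) : Prop :=
  exists M : R, forall x, X x -> `|x.1| <= M /\ `|x.2| <= M.

Definition pixel {R : realType} (d : R) (k l : int) : set (R * R) :=
  [set y | d * k%:~R <= y.1 <= d * (k + 1)%:~R /\
           d * l%:~R <= y.2 <= d * (l + 1)%:~R].

Definition area {R : realType} (A : set (R * R)) : \bar R :=
  ((@lebesgue_measure R) \x (@lebesgue_measure R))%E A.

Definition grey_pixel {R : realType} (X : set (R * R)) (d : R) (k l : int) : Prop :=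
  (0 < area (X `&` pixel d k l))%E /\ (area (X `&` pixel d k l) < (d ^+ 2)%:E)%E.

Definition hseg {R : realType} (y a b : R) : set (R * R) :=
  [set p | p.2 = y /\ a <= p.1 <= b].
Definition vseg {R : realType} (x a b : R) : set (R * R) :=
  [set p | p.1 = x /\ a <= p.2 <= b].

(* Main.v *)
Require Import Defs.
From HB Require Import structures.
From mathcomp Require Import all_boot all_order all_algebra.
From mathcomp Require Import all_classical all_reals all_analysis.
From mathcomp Require Import ring lra.
Import Order.TTheory GRing.Theory Num.Theory.
Import numFieldNormedType.Exports.
Local Open Scope classical_set_scope.
Local Open Scope ring_scope.

Definition sqd {R : realFieldType} (p q : R * R) := (p.1 - q.1) ^+ 2 + (p.2 - q.2) ^+ 2.


Lemma leR (R : realFieldType) (x y z : R) : x <= y -> y = z -> x <= z.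
Proof. by move=> h <-. Qed.
Arguments leR {R x y z}.
Lemma ltR (R : realFieldType) (x y z : R) : y < x -> y = z -> z < x.
Proof. by move=> h <-. Qed.
Arguments ltR {R x y z}.

Section Frame.

Variable R : realFieldType.
Implicit Types d r a b c e u v : R.

Lemma sq_bound (x r : R) : 0 <= r -> x ^+ 2 <= r ^+ 2 -> - r <= x /\ x <= r.
Proof.
move=> r0 h; split.
- have [//|hx] := lerP (- r) x; exfalso.
  have : 0 < (- x - r) * (r - x) by apply: mulr_gt0; lra.
  nra.
- have [//|hx] := lerP x r; exfalso.
  have : 0 < (x - r) * (r + x) by apply: mulr_gt0; lra.
  nra.
Qed.

Lemma sq_lt2 (y m1 m2 : R) : 0 <= m1 -> 0 <= m2 -> - m1 < y -> y < m2 ->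
  y ^+ 2 < m1 ^+ 2 + m2 ^+ 2.
Proof.
move=> h1 h2 hy1 hy2; have [y0|y0] := lerP 0 y.
- have : y * y < m2 * m2 by apply: ltr_pM => //.
  nra.
- have : (- y) * (- y) < m1 * m1 by apply: ltr_pM => //; lra.
  nra.
Qed.

Lemma sq_ltK (y m1 m2 K : R) : 0 <= m1 -> 0 <= m2 -> - m1 <= y -> y <= m2 ->
  m1 ^+ 2 < K -> m2 ^+ 2 < K -> y ^+ 2 < K.
Proof.
move=> h1 h2 hy1 hy2 k1 k2; have [y0|y0] := lerP 0 y.
- have : y * y <= m2 * m2 by apply: ler_pM => //.
  nra.
- have : (- y) * (- y) <= m1 * m1 by apply: ler_pM => //; lra.
  nra.
Qed.

Lemma sq_mono (x y : R) : 0 <= y -> x ^+ 2 <= y ^+ 2 -> x <= y.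
Proof. by move=> y0 h; have [] := @sq_bound x y y0 h. Qed.

Lemma across d r a b c e u v :
  0 < d -> 0 < a -> a < 2 * d -> 0 < b -> b < 2 * d -> 0 < c -> c < 2 * d ->
  0 < e -> e < 2 * d -> 0 <= v -> u ^+ 2 + v ^+ 2 = r ^+ 2 ->
  r ^+ 2 <= (a + u) ^+ 2 + (c - v) ^+ 2 ->
  r ^+ 2 <= (2 * d - (a + u)) ^+ 2 + (e - v) ^+ 2 ->
  r ^+ 2 <= (b - (a + u)) ^+ 2 + (2 * d - v) ^+ 2 ->
  ~ (0 <= a + u <= 2 * d /\ 0 <= v <= 2 * d) ->
  a + u < 0 \/ 2 * d < a + u.
Proof.
move=> d0 a0 a2 b0 b2 c0 c2 e0 e2 v0 huv hL hR hT hC.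
have [x0|x0] := ltP (a + u) 0; first by left.
have [x2|x2] := ltP (2 * d) (a + u); first by right.
exfalso.
have v2 : 2 * d < v.
  have [//|v2] := ltP (2 * d) v; exfalso; apply: hC; rewrite x0 x2 v0 v2; done.
set x := a + u in x0 x2 hL hR hT.
have hu : u = x - a by rewrite /x; ring.
rewrite hu in huv.
have h1 : a <= 2 * x.
  have : c * (c - 2 * v) <= 0 by rewrite mulr_ge0_le0 //; lra.
  nra.
have h2 : 2 * x <= 2 * d + a.
  have : 0 <= e * (2 * v - e) by apply: mulr_ge0 => //; lra.
  nra.
have h3 : (b - a) * (b + a - 2 * x) >= 4 * d * v - 4 * d * d by nra.
have h4 : (b - a) * (b + a - 2 * x) <= 4 * d * d.
  nra.
nra.
Qed.

Lemma corner r a c (u1 v1 u3 v3 : R) :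
  0 < a -> 0 < c -> a + u1 < 0 -> 0 <= v1 -> 0 <= u3 -> c + v3 < 0 ->
  u1 ^+ 2 + v1 ^+ 2 = r ^+ 2 -> u3 ^+ 2 + v3 ^+ 2 = r ^+ 2 ->
  r ^+ 2 <= (a + u1) ^+ 2 + (c - v1) ^+ 2 ->
  r ^+ 2 <= (a - u3) ^+ 2 + (c + v3) ^+ 2 -> False.
Proof.
move=> a0 c0 h1 h2 h3 h4 e1 e3 hA hB.
have : c ^+ 2 > a ^+ 2 by nra.
have : a ^+ 2 > c ^+ 2 by nra.
lra.
Qed.

Lemma cl1 d r a c (u1 v1 u3 v3 : R) :
  0 < d -> 2 * d ^+ 2 < r ^+ 2 -> 0 < r -> 0 < a -> 0 < c -> c <= 2 * d ->
  a + u1 < 0 -> 0 <= v1 -> 0 <= u3 -> 2 * d < c + v3 ->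
  u1 ^+ 2 + v1 ^+ 2 = r ^+ 2 -> u3 ^+ 2 + v3 ^+ 2 = r ^+ 2 ->
  r ^+ 2 <= (a + u1) ^+ 2 + (c - v1) ^+ 2 ->
  (a + u1 + u3) ^+ 2 + (v1 + v3 - c) ^+ 2 < 4 * r ^+ 2.
Proof.
move=> d0 dr r0 a0 c0 c2 h1 h2 h3 h4 e1 e3 hA.
have hq : a * (a + u1) < 0 by rewrite pmulr_rlt0.
have hc : 0 < c * (c - 2 * v1) by nra.
have hv1 : 2 * v1 < c by move: hc; rewrite pmulr_rgt0 //; lra.
have [hu1 _] : - r <= u1 /\ u1 <= r by apply: sq_bound; nra.
have [_ hu3] : - r <= u3 /\ u3 <= r by apply: sq_bound; nra.
have [_ hv3] : - r <= v3 /\ v3 <= r by apply: sq_bound; nra.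
have hx : (a + u1 + u3) ^+ 2 < r ^+ 2 by nra.
have hy : (v1 + v3 - c) ^+ 2 < (2 * d) ^+ 2 + r ^+ 2.
  apply: sq_lt2; lra.
nra.
Qed.

Lemma cl2 d r a b (u1 v1 u2 v2 : R) :
  0 < d -> 2 * d ^+ 2 < r ^+ 2 -> 0 < r -> 0 < a -> a < 2 * d -> 0 <= b -> b <= 2 * d ->
  a + u1 < 0 -> 0 <= v1 -> v2 <= 0 -> 2 * d < b + u2 ->
  u1 ^+ 2 + v1 ^+ 2 = r ^+ 2 -> u2 ^+ 2 + v2 ^+ 2 = r ^+ 2 ->
  (a + u1 - (b - u2)) ^+ 2 + (v1 - (2 * d - v2)) ^+ 2 < 4 * r ^+ 2 \/
  (a - u1 - (b + u2)) ^+ 2 + (- v1 - (2 * d + v2)) ^+ 2 < 4 * r ^+ 2.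
Proof.
move=> d0 dr r0 a0 a2 b0 b2 h1 h2 h3 h4 e1 e2.
have [hu1 _] : - r <= u1 /\ u1 <= r by apply: sq_bound; nra.
have [_ hu2] : - r <= u2 /\ u2 <= r by apply: sq_bound; nra.
have [_ hv1] : - r <= v1 /\ v1 <= r by apply: sq_bound; nra.
have [hv2 _] : - r <= v2 /\ v2 <= r by apply: sq_bound; nra.
have [hv|hv] := lerP (- v2) v1.
- left.
  have hvv : (- v2) * (- v2) <= v1 * v1 by apply: ler_pM => //; lra.
  have hW : - u1 <= u2 by apply: sq_mono; nra.
  have hx : (a + u1 - (b - u2)) ^+ 2 < 2 * r ^+ 2.
    apply: (@sq_ltK _ (2 * d) r); nra.
  have hy : (v1 - (2 * d - v2)) ^+ 2 < 2 * r ^+ 2.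
    apply: (@sq_ltK _ (2 * d) r); nra.
  lra.
- right.
  have hvv : v1 * v1 <= (- v2) * (- v2) by apply: ler_pM => //; lra.
  have hW : u2 <= - u1 by apply: sq_mono; nra.
  have hx : (a - u1 - (b + u2)) ^+ 2 < 2 * r ^+ 2.
    apply: (@sq_ltK _ (2 * d) r); nra.
  have hy : (- v1 - (2 * d + v2)) ^+ 2 < 2 * r ^+ 2.
    apply: (@sq_ltK _ (2 * d) r); nra.
  lra.
Qed.
End Frame.

Definition col {R : realFieldType} (good bad : R * R -> Prop) (z w : R * R) :=
  (good z /\ bad w) \/ (bad z /\ good w).

Lemma get_in (R : realFieldType) (r : R) (good bad P : R * R -> Prop)
  (hP : forall p, P p -> exists xb xw, good xb /\ bad xw /\
    xw.1 = 2 * p.1 - xb.1 /\ xw.2 = 2 * p.2 - xb.2 /\ sqd p xb = r ^+ 2)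
  p (al be : R) : P p -> exists u v, 0 <= al * u + be * v /\
  u ^+ 2 + v ^+ 2 = r ^+ 2 /\ col good bad (p.1 + u, p.2 + v) (p.1 - u, p.2 - v).
Proof.
move=> /hP [[xb1 xb2] [[xw1 xw2] [gb [bw [e1 [e2 e3]]]]]].
rewrite /sqd /= in e1 e2 e3.
have [h|h] := lerP 0 (al * (xb1 - p.1) + be * (xb2 - p.2)).
- exists (xb1 - p.1), (xb2 - p.2); split => //; split; first by rewrite -e3; ring.
  left; split.
  + by have -> : (p.1 + (xb1 - p.1), p.2 + (xb2 - p.2)) = (xb1, xb2)
      by congr pair; ring.
  + by have -> : (p.1 - (xb1 - p.1), p.2 - (xb2 - p.2)) = (xw1, xw2)
      by congr pair; rewrite ?e1 ?e2; ring.
- exists (p.1 - xb1), (p.2 - xb2); split.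
    have -> : al * (p.1 - xb1) + be * (p.2 - xb2) =
      - (al * (xb1 - p.1) + be * (xb2 - p.2)) by ring.
    by rewrite oppr_ge0 ltW.
  split; first by rewrite -e3; ring.
  right; split.
  + by have -> : (p.1 + (p.1 - xb1), p.2 + (p.2 - xb2)) = (xw1, xw2)
      by congr pair; rewrite ?e1 ?e2; ring.
  + by have -> : (p.1 - (p.1 - xb1), p.2 - (p.2 - xb2)) = (xb1, xb2)
      by congr pair; ring.
Qed.

Arguments get_in {R r good bad P} hP {p} al be.

Lemma col_gb (R : realFieldType) (good bad : R * R -> Prop) z w :
  col good bad z w -> (good z \/ bad z) /\ (good w \/ bad w).
Proof. by case=> [[? ?]|[? ?]]; split; tauto. Qed.

Arguments col_gb {R good bad z w}.

Lemma close_ok (R : realFieldType) (r : R) (good bad : R * R -> Prop)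
  (hD : forall z w, good z -> bad w -> 4 * r ^+ 2 <= sqd z w) z w :
  sqd z w < 4 * r ^+ 2 -> ~ (good z /\ bad w) /\ ~ (bad z /\ good w).
Proof.
move=> h; split => -[g b].
- by have := hD _ _ g b; rewrite leNgt h.
- have := hD _ _ b g; rewrite leNgt.
  have -> : sqd w z = sqd z w by rewrite /sqd; ring.
  by rewrite h.
Qed.

Arguments close_ok {R r good bad} hD {z w}.

Lemma FL (R : realFieldType) (d r : R) (good bad P : R * R -> Prop)
  (d0 : 0 < d) (r0 : 0 < r) (dr : 2 * d ^+ 2 < r ^+ 2)
  (hA : forall z q, good z \/ bad z -> P q -> r ^+ 2 <= sqd q z)
  (hD : forall z w, good z -> bad w -> 4 * r ^+ 2 <= sqd z w)
  (hQ : forall z, good z \/ bad z -> ~ (0 <= z.1 <= 2 * d /\ 0 <= z.2 <= 2 * d))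
  (hP : forall p, P p -> exists xb xw, good xb /\ bad xw /\
    xw.1 = 2 * p.1 - xb.1 /\ xw.2 = 2 * p.2 - xb.2 /\ sqd p xb = r ^+ 2)
  a b c e :
  0 < a -> a < 2 * d -> 0 < b -> b < 2 * d -> 0 < c -> c < 2 * d ->
  0 < e -> e < 2 * d ->
  P (a, 0) -> P (b, 2 * d) -> P (0, c) -> P (2 * d, e) -> False.
Proof.
move=> a0 a2 b0 b2 c0 c2 e0 e2 PB PT PL PR.
have [u1 [v1 [i1 [n1 k1]]]] := get_in hP 0 1 PB.
have [u2 [v2 [i2 [n2 k2]]]] := get_in hP 0 (-1) PT.
have [u3 [v3 [i3 [n3 k3]]]] := get_in hP 1 0 PL.
have [u4 [v4 [i4 [n4 k4]]]] := get_in hP (-1) 0 PR.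
rewrite /= in k1 k2 k3 k4.
have [[gB1 gB2] [gT1 gT2]] := (col_gb k1, col_gb k2).
have [[gL1 gL2] [gR1 gR2]] := (col_gb k3, col_gb k4).
move: i1 i2 i3 i4; rewrite !mul0r !add0r !addr0 !mul1r !mulN1r => i1 i2' i3 i4'.
have i2 : v2 <= 0 by rewrite -oppr_ge0.
have i4 : u4 <= 0 by rewrite -oppr_ge0.
have A := fun z q (g : good z \/ bad z) (pq : P q) => hA _ _ g pq.
have LB := A _ _ gB1 PL; have RB := A _ _ gB1 PR; have TB := A _ _ gB1 PT.
have LT := A _ _ gT1 PL; have RT := A _ _ gT1 PR; have BT := A _ _ gT1 PB.
have BL := A _ _ gL1 PB; have TL := A _ _ gL1 PT; have RL := A _ _ gL1 PR.
have BR := A _ _ gR1 PB; have TR := A _ _ gR1 PT; have LR := A _ _ gR1 PL.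
have QB := hQ _ gB1; have QT := hQ _ gT1; have QL := hQ _ gL1; have QR := hQ _ gR1.
rewrite /= in QB QT QL QR.
clear A.
have pos x : 0 < x -> x < 2 * d -> 0 < 2 * d - x /\ 2 * d - x < 2 * d.
  by move=> h1 h2; split; [rewrite subr_gt0 | rewrite gtrBl].
have [a0' a2'] := pos _ a0 a2; have [b0' b2'] := pos _ b0 b2.
have [c0' c2'] := pos _ c0 c2; have [e0' e2'] := pos _ e0 e2.
have nN x y : x ^+ 2 + y ^+ 2 = r ^+ 2 -> (- x) ^+ 2 + y ^+ 2 = r ^+ 2 /\
   x ^+ 2 + (- y) ^+ 2 = r ^+ 2 /\ y ^+ 2 + x ^+ 2 = r ^+ 2 /\
   y ^+ 2 + (- x) ^+ 2 = r ^+ 2 /\ (- y) ^+ 2 + x ^+ 2 = r ^+ 2 /\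
   (- x) ^+ 2 + (- y) ^+ 2 = r ^+ 2 /\ (- y) ^+ 2 + (- x) ^+ 2 = r ^+ 2.
  by move=> h; rewrite !sqrrN; do !split => //; rewrite addrC.
have [n1a [n1b [n1c [n1d [n1e [n1f n1g]]]]]] := nN _ _ n1.
have [n2a [n2b [n2c [n2d [n2e [n2f n2g]]]]]] := nN _ _ n2.
have [n3a [n3b [n3c [n3d [n3e [n3f n3g]]]]]] := nN _ _ n3.
have [n4a [n4b [n4c [n4d [n4e [n4f n4g]]]]]] := nN _ _ n4.
have tB : a + u1 < 0 \/ 2 * d < a + u1.
  apply: (@across _ d r a b c e u1 v1 d0 a0 a2 b0 b2 c0 c2 e0 e2 i1 n1).
  - by apply: (leR LB); rewrite /sqd /=; ring.
  - by apply: (leR RB); rewrite /sqd /=; ring.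
  - by apply: (leR TB); rewrite /sqd /=; ring.
  - by rewrite add0r in QB.
have tT : b + u2 < 0 \/ 2 * d < b + u2.
  apply: (@across _ d r b a (2 * d - c) (2 * d - e) u2 (- v2) d0 b0 b2 a0 a2
     c0' c2' e0' e2' i2' n2b).
  - by apply: (leR LT); rewrite /sqd /=; ring.
  - by apply: (leR RT); rewrite /sqd /=; ring.
  - by apply: (leR BT); rewrite /sqd /=; ring.
  - by clear -QT; lra.
have tL : c + v3 < 0 \/ 2 * d < c + v3.
  apply: (@across _ d r c e a b v3 u3 d0 c0 c2 e0 e2 a0 a2 b0 b2 i3 n3c).
  - by apply: (leR BL); rewrite /sqd /=; ring.
  - by apply: (leR TL); rewrite /sqd /=; ring.
  - by apply: (leR RL); rewrite /sqd /=; ring.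
  - by clear -QL; lra.
have tR : e + v4 < 0 \/ 2 * d < e + v4.
  apply: (@across _ d r e c (2 * d - a) (2 * d - b) v4 (- u4) d0 e0 e2 c0 c2
     a0' a2' b0' b2' i4' n4d).
  - by apply: (leR BR); rewrite /sqd /=; ring.
  - by apply: (leR TR); rewrite /sqd /=; ring.
  - by apply: (leR LR); rewrite /sqd /=; ring.
  - by clear -QR; lra.
have c00 : ~ (a + u1 < 0 /\ c + v3 < 0).
  move=> [h1 h2]; apply: (@corner _ r a c u1 v1 u3 v3 a0 c0 h1 i1 i3 h2 n1 n3).
  - by apply: (leR LB); rewrite /sqd /=; ring.
  - by apply: (leR BL); rewrite /sqd /=; ring.
have c20 : ~ (2 * d < a + u1 /\ e + v4 < 0).
  move=> [h1 h2].
  have h1' : 2 * d - a + - u1 < 0 by clear -h1; lra.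
  apply: (@corner _ r (2 * d - a) e (- u1) v1 (- u4) v4 a0' e0 h1' i1 i4' h2 n1a n4a).
  - by apply: (leR RB); rewrite /sqd /=; ring.
  - by apply: (leR BR); rewrite /sqd /=; ring.
have c02 : ~ (b + u2 < 0 /\ 2 * d < c + v3).
  move=> [h1 h2].
  have h2' : 2 * d - c + - v3 < 0 by clear -h2; lra.
  apply: (@corner _ r b (2 * d - c) u2 (- v2) u3 (- v3) b0 c0' h1 i2' i3 h2' n2b n3b).
  - by apply: (leR LT); rewrite /sqd /=; ring.
  - by apply: (leR TL); rewrite /sqd /=; ring.
have c22 : ~ (2 * d < b + u2 /\ 2 * d < e + v4).
  move=> [h1 h2].
  have h1' : 2 * d - b + - u2 < 0 by clear -h1; lra.
  have h2' : 2 * d - e + - v4 < 0 by clear -h2; lra.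
  apply: (@corner _ r (2 * d - b) (2 * d - e) (- u2) (- v2) (- u4) (- v4) b0' e0'
    h1' i2' i4' h2' n2f n4f).
  - by apply: (leR RT); rewrite /sqd /=; ring.
  - by apply: (leR TR); rewrite /sqd /=; ring.
case: tB => hB.
-
  have hL : 2 * d < c + v3 by case: tL => // h; exfalso; apply: c00.
  have hT : 2 * d < b + u2 by case: tT => // h; exfalso; apply: c02.
  have f1 : sqd (a + u1, 0 + v1) (0 - u3, c - v3) < 4 * r ^+ 2.
    apply: (ltR (@cl1 _ d r a c u1 v1 u3 v3 d0 dr r0 a0 c0 (ltW c2) hB i1 i3 hL n1 n3 (leR LB _)));
      rewrite /sqd /=; ring.
  have hL' : 2 * d - c + - v3 < 0 by clear -hL; lra.
  have f2 : sqd (0 + u3, c + v3) (b - u2, 2 * d - v2) < 4 * r ^+ 2.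
    apply: (ltR (@cl1 _ d r (2 * d - c) b (- v3) u3 (- v2) u2 d0 dr r0 c0' b0 (ltW b2)
      hL' i3 i2' hT n3e n2e (leR TL _)));
      rewrite /sqd /=; ring.
  have f3 : sqd (a + u1, 0 + v1) (b - u2, 2 * d - v2) < 4 * r ^+ 2 \/
            sqd (a - u1, 0 - v1) (b + u2, 2 * d + v2) < 4 * r ^+ 2.
    case: (@cl2 _ d r a b u1 v1 u2 v2 d0 dr r0 a0 a2 (ltW b0) (ltW b2) hB i1 i2 hT n1 n2)
      => h; [left|right]; apply: (ltR h); rewrite /sqd /=; ring.
  have [x1 y1] := close_ok hD f1; have [x2 y2] := close_ok hD f2.
  by case: f3 => /(close_ok hD) [x3 y3]; rewrite /col in k1 k2 k3;
    clear -k1 k2 k3 x1 y1 x2 y2 x3 y3; tauto.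
-
  have hR : 2 * d < e + v4 by case: tR => // h; exfalso; apply: c20.
  have hT : b + u2 < 0 by case: tT => // h; exfalso; apply: c22.
  have hB' : 2 * d - a + - u1 < 0 by clear -hB; lra.
  have f1 : sqd (a + u1, 0 + v1) (2 * d - u4, e - v4) < 4 * r ^+ 2.
    apply: (ltR (@cl1 _ d r (2 * d - a) e (- u1) v1 (- u4) v4 d0 dr r0 a0' e0 (ltW e2)
      hB' i1 i4' hR n1a n4a (leR RB _)));
      rewrite /sqd /=; ring.
  have hR' : 2 * d - e + - v4 < 0 by clear -hR; lra.
  have hT' : 2 * d < 2 * d - b + - u2 by clear -hT; lra.
  have f2 : sqd (2 * d + u4, e + v4) (b - u2, 2 * d - v2) < 4 * r ^+ 2.
    apply: (ltR (@cl1 _ d r (2 * d - e) (2 * d - b) (- v4) (- u4) (- v2) (- u2) d0 dr r0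
      e0' b0' (ltW b2') hR' i4' i2' hT' n4g n2g (leR TR _)));
      rewrite /sqd /=; ring.
  have f3 : sqd (a + u1, 0 + v1) (b - u2, 2 * d - v2) < 4 * r ^+ 2 \/
            sqd (a - u1, 0 - v1) (b + u2, 2 * d + v2) < 4 * r ^+ 2.
    case: (@cl2 _ d r (2 * d - a) (2 * d - b) (- u1) v1 (- u2) v2 d0 dr r0 a0' a2'
      (ltW b0') (ltW b2') hB' i1 i2 hT' n1a n2a)
      => h; [left|right]; apply: (ltR h); rewrite /sqd /=; ring.
  have [x1 y1] := close_ok hD f1; have [x2 y2] := close_ok hD f2.
  by case: f3 => /(close_ok hD) [x3 y3]; rewrite /col in k1 k2 k4;
    clear -k1 k2 k4 x1 y1 x2 y2 x3 y3; tauto.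
Qed.

Section Main.
Variable R : realType.

Lemma leb_itv (x y : R) : x <= y ->
  (@lebesgue_measure R) `[x, y] = (y - x)%:E.
Proof.
move=> xy; rewrite lebesgue_measure_itv /= lte_fin.
have [xy'|] := ltP x y; first by rewrite EFinB.
move=> yx; have -> : y = x by apply/eqP; rewrite eq_le xy yx.
by rewrite subrr.
Qed.

Lemma area_pixel (d : R) (k l : int) : 0 < d ->
  area (pixel d k l) = (d ^+ 2)%:E.
Proof.
move=> d0.
have -> : pixel d k l = `[d * k%:~R, d * (k + 1)%:~R] `*` `[d * l%:~R, d * (l + 1)%:~R].
  by apply/seteqP; split=> -[x y] /=; rewrite !in_itv /=.
rewrite /area product_measure1E //.
have h (z : int) : d * z%:~R <= d * (z + 1)%:~R.
  rewrite ler_pM2l // ler_int; exact: ler_wpDr.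
rewrite -[X in (X * _)%E]/((@lebesgue_measure R) _).
rewrite -[X in (_ * X)%E]/((@lebesgue_measure R) _).
rewrite !leb_itv // -EFinM; congr (_%:E).
rewrite !intrD; ring.
Qed.

Lemma open_odisk (c : R * R) (r : R) : open (odisk c r).
Proof.
pose f := fun y : R * R => (y.1 - c.1) ^+ 2 + (y.2 - c.2) ^+ 2.
have -> : odisk c r = f @^-1` [set t | t < r ^+ 2] by [].
apply: open_comp; last exact: open_lt.
move=> x _; rewrite /f.
apply: cvgD; rewrite expr2; apply: cvgM.
- by apply: cvgB; [exact: cvg_fst | exact: cvg_cst].
- by apply: cvgB; [exact: cvg_fst | exact: cvg_cst].
- by apply: cvgB; [exact: cvg_snd | exact: cvg_cst].
- by apply: cvgB; [exact: cvg_snd | exact: cvg_cst].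
Qed.

Lemma bdry_notin_in (X U : set (R * R)) q :
  open U -> U `<=` X -> bdry X q -> ~ U q.
Proof.
move=> oU UX [_ nint] Uq; apply: nint.
rewrite /interior /=; apply: (filterS UX); exact: open_nbhs_nbhs.
Qed.

Lemma bdry_notin_out (X U : set (R * R)) q :
  open U -> U `<=` ~` X -> bdry X q -> ~ U q.
Proof.
move=> oU UX [cl _] Uq.
have := cl U (open_nbhs_nbhs (conj oU Uq)).
by move=> [z [Xz Uz]]; exact: (UX z Uz Xz).
Qed.

Lemma bdry_centers (r : R) (X : set (R * R)) p : r_regular r X -> bdry X p ->
  exists xb xw, odisk xb r `<=` X /\ odisk xw r `<=` ~` X /\
  xw.1 = 2 * p.1 - xb.1 /\ xw.2 = 2 * p.2 - xb.2 /\ sqd p xb = r ^+ 2.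
Proof.
move=> [_ hreg] hp; have [xb [xw [hb [hw heq]]]] := hreg p hp.
have : (cdisk xb r `&` cdisk xw r) p by rewrite heq.
move=> [cb cw]; rewrite /cdisk /= in cb cw.
have nb := bdry_notin_in _ _ _ (open_odisk xb r) hb hp.
have nw := bdry_notin_out _ _ _ (open_odisk xw r) hw hp.
rewrite /odisk /= in nb nw.
have eb : (p.1 - xb.1) ^+ 2 + (p.2 - xb.2) ^+ 2 = r ^+ 2.
  by apply/eqP; rewrite eq_le cb /=; rewrite leNgt; apply/negP.
have ew : (p.1 - xw.1) ^+ 2 + (p.2 - xw.2) ^+ 2 = r ^+ 2.
  by apply/eqP; rewrite eq_le cw /=; rewrite leNgt; apply/negP.
pose m := ((xb.1 + xw.1) / 2, (xb.2 + xw.2) / 2).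
have hm : (cdisk xb r `&` cdisk xw r) m.
  rewrite /cdisk /m /=; split.
  - have : 0 <= ((p.1 - xb.1) + (p.1 - xw.1)) ^+ 2 + ((p.2 - xb.2) + (p.2 - xw.2)) ^+ 2.
      by rewrite addr_ge0 // sqr_ge0.
    move=> h0.
    have -> : ((xb.1 + xw.1) / 2 - xb.1) ^+ 2 + ((xb.2 + xw.2) / 2 - xb.2) ^+ 2 =
      ((p.1 - xb.1 - (p.1 - xw.1)) ^+ 2 + (p.2 - xb.2 - (p.2 - xw.2)) ^+ 2) / 4.
      by field.
    rewrite ler_pdivrMr; last by lra.
    nra.
  - have : 0 <= ((p.1 - xb.1) + (p.1 - xw.1)) ^+ 2 + ((p.2 - xb.2) + (p.2 - xw.2)) ^+ 2.
      by rewrite addr_ge0 // sqr_ge0.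
    move=> h0.
    have -> : ((xb.1 + xw.1) / 2 - xw.1) ^+ 2 + ((xb.2 + xw.2) / 2 - xw.2) ^+ 2 =
      ((p.1 - xb.1 - (p.1 - xw.1)) ^+ 2 + (p.2 - xb.2 - (p.2 - xw.2)) ^+ 2) / 4.
      by field.
    rewrite ler_pdivrMr; last by lra.
    nra.
rewrite heq /m in hm.
have e1 : p.1 = (xb.1 + xw.1) / 2 by rewrite -hm.
have e2 : p.2 = (xb.2 + xw.2) / 2 by rewrite -hm.
exists xb, xw; split => //; split => //; rewrite /sqd /=.
split; first by rewrite e1; field.
by split; first by rewrite e2; field.
Qed.

Lemma disjD (X : set (R * R)) (z w : R * R) (r : R) :
  odisk z r `<=` X -> odisk w r `<=` ~` X -> 4 * r ^+ 2 <= sqd z w.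
Proof.
move=> hz hw; rewrite leNgt; apply/negP => h.
pose m := ((z.1 + w.1) / 2, (z.2 + w.2) / 2).
have e : forall c : R * R, c = z \/ c = w ->
    (m.1 - c.1) ^+ 2 + (m.2 - c.2) ^+ 2 = sqd z w / 4.
  by move=> c [->|->]; rewrite /m /sqd /=; field.
have hmz : odisk z r m by rewrite /odisk /= (e z); [lra | left].
have hmw : odisk w r m by rewrite /odisk /= (e w); [lra | right].
exact: (hw m hmw (hz m hmz)).
Qed.

Lemma pix_sub (d r : R) (i j : int) (z : R * R) : 0 < d -> 2 * d ^+ 2 < r ^+ 2 ->
  pixel d i j z -> pixel d i j `<=` odisk z r.
Proof.
move=> d0 dr; rewrite /pixel /odisk /= !intrD !mulrDr !mulr1.
move=> [/andP[z1 z2] /andP[z3 z4]] y [/andP[y1 y2] /andP[y3 y4]].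
have h1 : (y.1 - z.1) ^+ 2 <= d ^+ 2.
  have : 0 <= (d - (y.1 - z.1)) * (d + (y.1 - z.1)) by apply: mulr_ge0; lra.
  nra.
have h2 : (y.2 - z.2) ^+ 2 <= d ^+ 2.
  have : 0 <= (d - (y.2 - z.2)) * (d + (y.2 - z.2)) by apply: mulr_ge0; lra.
  nra.
rewrite /=; lra.
Qed.

Lemma grey_ng (X : set (R * R)) (d r : R) (i j : int) (z : R * R) :
  0 < d -> 2 * d ^+ 2 < r ^+ 2 -> grey_pixel X d i j -> pixel d i j z ->
  ~ (odisk z r `<=` X) /\ ~ (odisk z r `<=` ~` X).
Proof.
move=> d0 dr [g1 g2] pz; have sub := @pix_sub d r i j z d0 dr pz; split => h.
- have : X `&` pixel d i j = pixel d i j.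
    by apply/seteqP; split => y //=; [case | move=> py; split => //; apply: h; apply: sub].
  move=> e; rewrite e area_pixel // in g2.
  by rewrite ltxx in g2.
- have : X `&` pixel d i j = set0.
    apply/seteqP; split => y //= [Xy py].
    exact: (h y (sub y py) Xy).
  move=> e; rewrite e /area measure0 in g1.
  by rewrite ltxx in g1.
Qed.

End Main.

Lemma pixelE (R : realType) (d : R) (i j : int) (z : R * R) :
  pixel d i j z <-> (d * i%:~R <= z.1 <= d * i%:~R + d) /\ (d * j%:~R <= z.2 <= d * j%:~R + d).
Proof. by rewrite /pixel /= !intrD !mulrDr !mulr1. Qed.

Theorem lemma3p14 (R : realType) (r d : R) (X : set (R * R)) (k l : int) :
  0 < r -> 0 < d -> d * Num.sqrt 2 < r ->
  bounded2 X -> r_regular r X ->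
  (forall i j : int, ~ bdry X (d * i%:~R, d * j%:~R)) ->
  grey_pixel X d k l -> grey_pixel X d (k + 1) l ->
  grey_pixel X d k (l + 1) -> grey_pixel X d (k + 1) (l + 1) ->
  ~ [/\ bdry X `&` hseg (d * l%:~R) (d * k%:~R) (d * (k + 2)%:~R) !=set0,
        bdry X `&` hseg (d * (l + 2)%:~R) (d * k%:~R) (d * (k + 2)%:~R) !=set0,
        bdry X `&` vseg (d * k%:~R) (d * l%:~R) (d * (l + 2)%:~R) !=set0 &
        bdry X `&` vseg (d * (k + 2)%:~R) (d * l%:~R) (d * (l + 2)%:~R) !=set0].
Proof.
move=> r0 d0 dsr _ reg hlat g00 g10 g01 g11.
move=> [[[xB yB] [bB hB]] [[xT yT] [bT hT]] [[xL yL] [bL hL]] [[xR yR] [bR hR]]].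
have dr : 2 * d ^+ 2 < r ^+ 2.
  have s0 : 0 <= d * Num.sqrt 2 by rewrite mulr_ge0 // ?ltW // sqrtr_ge0.
  have : (d * Num.sqrt 2) * (d * Num.sqrt 2) < r * r by apply: ltr_pM.
  rewrite mulrACA -!expr2 sqr_sqrtr //; lra.
set ox := d * k%:~R; set oy := d * l%:~R.
have ek2 : d * (k + 2)%:~R = ox + 2 * d by rewrite /ox /oy; ring.
have el2 : d * (l + 2)%:~R = oy + 2 * d by rewrite /ox /oy; ring.
have ek1 : d * (k + 1)%:~R = ox + d by rewrite /ox /oy; ring.
have el1 : d * (l + 1)%:~R = oy + d by rewrite /ox /oy; ring.
rewrite /hseg /vseg /= ek2 el2 in hB hT hL hR.
move: hB hT hL hR => [eB /andP[xB1 xB2]] [eT /andP[xT1 xT2]] [eL /andP[yL1 yL2]]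
  [eR /andP[yR1 yR2]].
subst yB yT xL xR.
pose good (c : R * R) := odisk c r `<=` X.
pose bad (c : R * R) := odisk c r `<=` ~` X.
have hA : forall z q, good z \/ bad z -> bdry X q -> r ^+ 2 <= sqd q z.
  move=> z q [g|g] hq; rewrite leNgt; apply/negP => h.
  - exact: (@bdry_notin_in _ _ _ _ (@open_odisk _ z r) g hq h).
  - exact: (@bdry_notin_out _ _ _ _ (@open_odisk _ z r) g hq h).
have hD : forall z w, good z -> bad w -> 4 * r ^+ 2 <= sqd z w.
  by move=> z w g b; exact: (@disjD _ _ _ _ _ g b).
have hQ : forall z, good z \/ bad z ->
    ~ (ox <= z.1 <= ox + 2 * d /\ oy <= z.2 <= oy + 2 * d).
  move=> z gb [/andP[z1 z2] /andP[z3 z4]].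
  have key : forall i j, grey_pixel X d i j -> pixel d i j z -> False.
    move=> i j g pz; have [n1 n2] := @grey_ng _ X d r i j z d0 dr g pz.
    by case: gb.
  have [x1|x1] := lerP z.1 (ox + d); have [y1|y1] := lerP z.2 (oy + d).
  - apply: (key _ _ g00); apply/pixelE; rewrite -/ox -/oy; split; apply/andP; split; lra.
  - apply: (key _ _ g01); apply/pixelE; rewrite -/ox el1; split; apply/andP; split; lra.
  - apply: (key _ _ g10); apply/pixelE; rewrite -/oy ek1; split; apply/andP; split; lra.
  - apply: (key _ _ g11); apply/pixelE; rewrite ek1 el1; split; apply/andP; split; lra.
have hP : forall p, bdry X p -> exists xb xw, good xb /\ bad xw /\
    xw.1 = 2 * p.1 - xb.1 /\ xw.2 = 2 * p.2 - xb.2 /\ sqd p xb = r ^+ 2.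
  by move=> p hp; apply: bdry_centers.
have ne1 : forall x y, bdry X (x, y) -> (x = ox \/ x = ox + 2 * d) ->
    (y = oy \/ y = oy + 2 * d) -> False.
  move=> x y hb [ex|ex] [ey|ey]; rewrite ex ey in hb.
  - exact: (hlat k l hb).
  - by have := hlat k (l + 2); rewrite el2; apply.
  - by have := hlat (k + 2) l; rewrite ek2; apply.
  - by have := hlat (k + 2) (l + 2); rewrite ek2 el2; apply.
have lt_of_ne : forall x y : R, x <= y -> x <> y -> x < y.
  by move=> x y h1 h2; rewrite lt_neqAle h1 andbT; apply/eqP.
pose tr (z : R * R) := (ox + z.1, oy + z.2).
have trK : forall z : R * R, tr (z.1 - ox, z.2 - oy) = z.
  by move=> [z1 z2]; rewrite /tr /=; congr pair; ring.
have sqd_tr : forall z w, sqd (tr z) (tr w) = sqd z w.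
  by move=> z w; rewrite /sqd /tr /=; ring.
apply: (@FL R d r (good \o tr) (bad \o tr) (bdry X \o tr) d0 r0 dr _ _ _ _
  (xB - ox) (xT - ox) (yL - oy) (yR - oy)).
- by move=> z q g pq; rewrite -sqd_tr; apply: hA.
- by move=> z w g b; rewrite -sqd_tr; apply: hD.
- move=> z g [/andP[h1 h2] /andP[h3 h4]]; apply: (hQ _ g); rewrite /tr /=.
  by split; apply/andP; split; lra.
- move=> p pp; have [xb [xw [g [b [e1 [e2 e3]]]]]] := hP _ pp.
  exists (xb.1 - ox, xb.2 - oy), (xw.1 - ox, xw.2 - oy).
  rewrite /= !trK; split => //; split => //.
  rewrite /tr /= in e1 e2; split; first by rewrite e1; ring.
  split; first by rewrite e2; ring.
  by rewrite -e3 -sqd_tr trK.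
- have : ox < xB by apply: lt_of_ne => // h; apply: (ne1 _ _ bB); auto.
  lra.
- have : xB < ox + 2 * d by apply: lt_of_ne => // h; apply: (ne1 _ _ bB); auto.
  lra.
- have : ox < xT by apply: lt_of_ne => // h; apply: (ne1 _ _ bT); auto.
  lra.
- have : xT < ox + 2 * d by apply: lt_of_ne => // h; apply: (ne1 _ _ bT); auto.
  lra.
- have : oy < yL by apply: lt_of_ne => // h; apply: (ne1 _ _ bL); auto.
  lra.
- have : yL < oy + 2 * d by apply: lt_of_ne => // h; apply: (ne1 _ _ bL); auto.
  lra.
- have : oy < yR by apply: lt_of_ne => // h; apply: (ne1 _ _ bR); auto.
  lra.
- have : yR < oy + 2 * d by apply: lt_of_ne => // h; apply: (ne1 _ _ bR); auto.
  lra.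
- by rewrite /= /tr /= ?addr0; have -> : ox + (xB - ox) = xB by ring.
- by rewrite /= /tr /= ?addr0; have -> : ox + (xT - ox) = xT by ring.
- by rewrite /= /tr /= ?addr0; have -> : oy + (yL - oy) = yL by ring.
- by rewrite /= /tr /= ?addr0; have -> : oy + (yR - oy) = yR by ring.
Qed.
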